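(* Let $\varepsilon\in(0,1)$ be irrational and let $b,M$ be integers with $b\ge1$ and $2b\le M$. Then the number of distinct $b$-amicable pairs $(w^{(1)},w^{(2)})$ with $w^{(1)},w^{(2)}\in\mathcal{L}_M(\varepsilon)$ is at most $M-b$.
   Context: For irrational $\varepsilon\in(0,1)$, let $T_\varepsilon:[0,1)\to[0,1)$, $T_\varepsilon(x)=x+1-\varepsilon$ on $[0,\varepsilon)$ and $x-\varepsilon$ on $[\varepsilon,1)$; the coding $u_{\varepsilon,x_0}\in\{0,1\}^{\mathbb{Z}}$ has $u_n=0$ if $T^n_\varepsilon(x_0)\in[0,\varepsilon)$ and $1$ otherwise. $\mathcal{L}_M(\varepsilon)$ is the set of length-$M$ factors of $u_{\varepsilon,x_0}$ (independent of $x_0$). 3iet words: for irrational $\varepsilon\in(0,1)$ and $\max\{\varepsilon,1-\varepsilon\}<\ell<1$, let $T_{\varepsilon,\ell}$ on $[0,\ell)$ be $x\mapsto x+1-\varepsilon$ on $I_A=[0,\ell-1+\varepsilon)$, $x\mapsto x+1-2\varepsilon$ on $I_B=[\ell-1+\varepsilon,\varepsilon)$, $x\mapsto x-\varepsilon$ on $I_C=[\varepsilon,\ell)$; the word $u_{\varepsilon,\ell,x_0}\in\{A,B,C\}^{\mathbb{Z}}$ has $u_n=X$ iff $T^n_{\varepsilon,\ell}(x_0)\in I_X$. A 3iet factor is a finite factor of some such word. Morphisms $\sigma_{01},\sigma_{10}:\{A,B,C\}^*\to\{0,1\}^*$: $\sigma_{01}(A)=0,\sigma_{01}(B)=01,\sigma_{01}(C)=1$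 and $\sigma_{10}(A)=0,\sigma_{10}(B)=10,\sigma_{10}(C)=1$. Two words $w^{(1)},w^{(2)}\in\{0,1\}^*$ form a $b$-amicable pair if there is a 3iet factor $w$ with exactly $b$ letters $B$ such that $w^{(1)}=\sigma_{01}(w)$ and $w^{(2)}=\sigma_{10}(w)$. *)

(* Defs.v *)
From Stdlib Require Import Reals Lra Lia ZArith Arith List.
Import ListNotations.
Open Scope R_scope.

Definition irrational (x : R) : Prop :=
  ~ exists p q : Z, q <> 0%Z /\ x = IZR p / IZR q.

Definition iterZ (f g : R -> R) (n : Z) (x : R) : R :=
  match n with
  | Z0 => x
  | Zpos p => Nat.iter (Pos.to_nat p) f x
  | Zneg p => Nat.iter (Pos.to_nat p) g x
  end.

Definition T2 (eps x : R) : R :=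
  if Rlt_dec x eps then x + 1 - eps else x - eps.
Definition T2inv (eps y : R) : R :=
  if Rlt_dec y (1 - eps) then y + eps else y - 1 + eps.

(* binary letters: false = 0, true = 1 *)
Definition coding2 (eps x0 : R) (n : Z) : bool :=
  if Rlt_dec (iterZ (T2 eps) (T2inv eps) n x0) eps then false else true.

Definition LangM (M : nat) (eps : R) (w : list bool) : Prop :=
  length w = M /\
  exists x0, 0 <= x0 < 1 /\
    exists n : Z, forall i : nat, (i < M)%nat ->
      nth i w false = coding2 eps x0 (n + Z.of_nat i)%Z.

Inductive ABC := LA | LB | LC.

Definition T3 (eps l x : R) : R :=
  if Rlt_dec x (l - 1 + eps) then x + 1 - eps
  else if Rlt_dec x eps then x + 1 - 2 * eps
  else x - eps.
Definition T3inv (eps l y : R) : R :=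
  if Rlt_dec y (l - eps) then y + eps
  else if Rlt_dec y (1 - eps) then y - 1 + 2 * eps
  else y - 1 + eps.

Definition coding3 (eps l x0 : R) (n : Z) : ABC :=
  let y := iterZ (T3 eps l) (T3inv eps l) n x0 in
  if Rlt_dec y (l - 1 + eps) then LA
  else if Rlt_dec y eps then LB
  else LC.

Definition iet3_factor (w : list ABC) : Prop :=
  exists eps l x0 : R,
    irrational eps /\ 0 < eps < 1 /\ Rmax eps (1 - eps) < l < 1 /\
    0 <= x0 < l /\
    exists n : Z, forall i : nat, (i < length w)%nat ->
      nth i w LA = coding3 eps l x0 (n + Z.of_nat i)%Z.

Definition isB (x : ABC) : bool := match x with LB => true | _ => false end.
Definition countB (w : list ABC) : nat := length (filter isB w).

Definition sigma01 (x : ABC) : list bool :=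
  match x with LA => [false] | LB => [false; true] | LC => [true] end.
Definition sigma10 (x : ABC) : list bool :=
  match x with LA => [false] | LB => [true; false] | LC => [true] end.

Definition amicable (b : nat) (w1 w2 : list bool) : Prop :=
  exists w : list ABC, iet3_factor w /\ countB w = b /\
    w1 = flat_map sigma01 w /\ w2 = flat_map sigma10 w.

(* Main.v *)
Require Import Defs.
From Stdlib Require Import Reals ZArith Arith List Lra Lia.
Import ListNotations.
Open Scope nat_scope.

Fixpoint cnt (f : nat -> bool) (n : nat) : nat :=
  match n with 0 => 0 | S n => cnt f n + (if f n then 1 else 0) end.

Lemma cnt_shift f l n : cnt f (l + n) = cnt f l + cnt (fun k => f (l + k)) n.
Proof. induction n; simpl; [rewrite Nat.add_0_r; lia|]. rewrite Nat.add_succ_r; simpl; rewrite IHn; lia. Qed.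

Lemma cnt_le f n : cnt f n <= n.
Proof. induction n; simpl; [lia|]. destruct (f n); lia. Qed.

Lemma cnt_mono f g n : (forall k, k < n -> f k = true -> g k = true) -> cnt f n <= cnt g n.
Proof.
  induction n; intros H; simpl; [lia|].
  assert (IH := IHn (fun k Hk => H k ltac:(lia))).
  specialize (H n ltac:(lia)). destruct (f n), (g n); try lia; discriminate (H eq_refl).
Qed.

Lemma cnt_pos_of f n k : k < n -> f k = true -> 1 <= cnt f n.
Proof.
  induction n; intros Hk Hf; simpl; [lia|].
  destruct (Nat.eq_dec k n). subst. rewrite Hf. lia.
  specialize (IHn ltac:(lia) Hf). lia.
Qed.

Lemma cnt_pos f n : 1 <= cnt f n -> exists k, k < n /\ f k = true.
Proof.
  induction n; simpl; intros H; [lia|].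
  destruct (f n) eqn:E. exists n; split; [lia|auto].
  destruct (IHn ltac:(lia)) as [k [Hk Hf]]. exists k; split; [lia|auto].
Qed.

Lemma cnt_add f g n : (forall k, k < n -> f k = true -> g k = true) ->
  cnt g n = cnt f n + cnt (fun k => xorb (f k) (g k)) n.
Proof.
  induction n; intros H; simpl; [lia|].
  rewrite (IHn (fun k Hk => H k ltac:(lia))).
  specialize (H n ltac:(lia)). destruct (f n), (g n); simpl; try lia; discriminate (H eq_refl).
Qed.

Lemma cnt_eq f g n : (forall k, k < n -> f k = true -> g k = true) -> cnt f n = cnt g n ->
  forall k, k < n -> f k = g k.
Proof.
  intros H Hc. rewrite (cnt_add f g n H) in Hc.
  assert (Z : cnt (fun k => xorb (f k) (g k)) n = 0) by lia.
  intros k Hk. destruct (f k) eqn:E1, (g k) eqn:E2; auto.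
  - specialize (H k Hk E1). congruence.
  - exfalso. assert (1 <= cnt (fun k => xorb (f k) (g k)) n).
    { apply (cnt_pos_of _ _ k Hk). rewrite E1, E2; reflexivity. } lia.
Qed.

Lemma comb (w : list ABC) : forall D : nat -> bool, D 0 = false ->
  (forall i, i < length (flat_map sigma01 w) ->
     xorb (nth i (flat_map sigma01 w) false) (nth i (flat_map sigma10 w) false)
     = xorb (D i) (D (S i))) ->
  D (length (flat_map sigma01 w)) = false /\
  cnt D (S (length (flat_map sigma01 w))) = countB w /\
  (forall p, p < length (flat_map sigma01 w) -> D (S p) = true ->
     D p = false /\ nth p (flat_map sigma01 w) false = false /\
     nth (S p) (flat_map sigma01 w) false = true).
Proof.
  induction w as [|a w IH]; intros D H0 H.
  - simpl. rewrite H0. split; [reflexivity|]. split; [reflexivity|]. intros q0 Hq; simpl in Hq; lia.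
  - destruct a; simpl in H; cbn [flat_map sigma01 sigma10 app length nth].
    + assert (H1 : D 1 = false).
      { specialize (H 0 ltac:(lia)). simpl in H. rewrite H0 in H. destruct (D 1); auto. }
      destruct (IH (fun k => D (S k)) H1) as [Ia [Ib Ic]].
      { intros i Hi. exact (H (S i) ltac:(lia)). }
      split; [exact Ia|]. split.
      * change (S (S (length (flat_map sigma01 w)))) with (1 + S (length (flat_map sigma01 w))).
        rewrite cnt_shift. simpl (cnt D 1). rewrite H0. exact Ib.
      * intros p Hp HD. destruct p. congruence.
        exact (Ic p ltac:(lia) HD).
    + assert (H1 : D 1 = true).
      { specialize (H 0 ltac:(lia)). simpl in H. rewrite H0 in H. destruct (D 1); auto. }
      assert (H2 : D 2 = false).
      { specialize (H 1 ltac:(lia)). simpl in H. rewrite H1 in H. destruct (D 2); auto. }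
      destruct (IH (fun k => D (S (S k))) H2) as [Ia [Ib Ic]].
      { intros i Hi. exact (H (S (S i)) ltac:(lia)). }
      split; [exact Ia|]. split.
      * change (S (S (S (length (flat_map sigma01 w))))) with (2 + S (length (flat_map sigma01 w))).
        rewrite cnt_shift. simpl (cnt D 2). rewrite H0, H1. unfold countB in *. simpl.
        rewrite <- Ib. reflexivity.
      * intros p Hp HD. destruct p. simpl. auto.
        destruct p. congruence.
        exact (Ic p ltac:(lia) HD).
    + assert (H1 : D 1 = false).
      { specialize (H 0 ltac:(lia)). simpl in H. rewrite H0 in H. destruct (D 1); auto. }
      destruct (IH (fun k => D (S k)) H1) as [Ia [Ib Ic]].
      { intros i Hi. exact (H (S i) ltac:(lia)). }
      split; [exact Ia|]. split.
      * change (S (S (length (flat_map sigma01 w)))) with (1 + S (length (flat_map sigma01 w))).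
        rewrite cnt_shift. simpl (cnt D 1). rewrite H0. exact Ib.
      * intros p Hp HD. destruct p. congruence.
        exact (Ic p ltac:(lia) HD).
Qed.

Lemma count_inj {X} (Q : X -> nat -> Prop) (qs : list X) :
  NoDup qs ->
  (forall p p' r, In p qs -> In p' qs -> Q p r -> Q p' r -> p = p') ->
  forall R, (forall p, In p qs -> exists r, In r R /\ Q p r) -> length qs <= length R.
Proof.
  induction qs as [|p ps IH]; intros ND Hinj R HR; simpl; [lia|].
  inversion ND as [|? ? Hnin ND']; subst.
  destruct (HR p (or_introl eq_refl)) as [r [Hr Qr]].
  assert (length ps <= length (remove Nat.eq_dec r R)).
  { apply IH; auto.
    - intros a a' r' Ha Ha'. apply Hinj; right; auto.
    - intros a Ha. destruct (HR a (or_intror Ha)) as [r' [Hr' Qr']].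
      exists r'. split; auto. apply in_in_remove; auto. intros E; subst.
      assert (a = p) by (apply (Hinj a p r); auto; [right; auto | left; auto]).
      subst; contradiction. }
  pose proof (remove_length_lt Nat.eq_dec R r Hr). lia.
Qed.
Open Scope R_scope.

Definition fr (x : R) : R := x - IZR (Int_part x).

Lemma fr_bounds x : 0 <= fr x < 1.
Proof. unfold fr. destruct (base_Int_part x). lra. Qed.

Lemma fr_unique x a z : 0 <= a < 1 -> a = x + IZR z -> fr x = a.
Proof.
  intros Ha Hx. unfold fr. destruct (base_Int_part x) as [H1 H2].
  assert (E1: (Int_part x < -z + 1)%Z) by (apply lt_IZR; rewrite plus_IZR, opp_IZR; simpl; lra).
  assert (E2: (-z < Int_part x + 1)%Z) by (apply lt_IZR; rewrite plus_IZR, opp_IZR; simpl; lra).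
  assert (E: Int_part x = (-z)%Z) by lia. rewrite E, opp_IZR. lra.
Qed.

Lemma fr_shift x z : fr (x + IZR z) = fr x.
Proof.
  apply (fr_unique _ _ (- z - Int_part x)). apply fr_bounds.
  unfold fr. rewrite minus_IZR, opp_IZR. ring.
Qed.

Lemma fr_id x : 0 <= x < 1 -> fr x = x.
Proof. intros. apply (fr_unique _ _ 0); [lra | simpl; ring]. Qed.

Lemma fr_fr u v : fr (fr u - v) = fr (u - v).
Proof.
  replace (fr u - v) with ((u - v) + IZR (- Int_part u)) by (unfold fr; rewrite opp_IZR; ring).
  apply fr_shift.
Qed.

Lemma T2_fr eps x : 0 < eps < 1 -> 0 <= x < 1 -> T2 eps x = fr (x - eps).
Proof.
  intros He Hx. unfold T2. destruct (Rlt_dec x eps).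
  - symmetry; apply (fr_unique _ _ 1); simpl; lra.
  - symmetry; apply (fr_unique _ _ 0); simpl; lra.
Qed.

Lemma T2inv_fr eps x : 0 < eps < 1 -> 0 <= x < 1 -> T2inv eps x = fr (x + eps).
Proof.
  intros He Hx. unfold T2inv. destruct (Rlt_dec x (1 - eps)).
  - symmetry; apply (fr_unique _ _ 0); simpl; lra.
  - symmetry; apply (fr_unique _ _ (-1)); simpl; lra.
Qed.

Lemma iter_pos eps x0 k : 0 < eps < 1 -> 0 <= x0 < 1 ->
  Nat.iter k (T2 eps) x0 = fr (x0 - INR k * eps).
Proof.
  intros He Hx. induction k.
  - simpl. rewrite fr_id; lra.
  - simpl Nat.iter. rewrite IHk, T2_fr by (try apply fr_bounds; lra).
    rewrite fr_fr, S_INR. f_equal. ring.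
Qed.

Lemma iter_neg eps x0 k : 0 < eps < 1 -> 0 <= x0 < 1 ->
  Nat.iter k (T2inv eps) x0 = fr (x0 + INR k * eps).
Proof.
  intros He Hx. induction k.
  - simpl. rewrite fr_id; lra.
  - simpl Nat.iter. rewrite IHk, T2inv_fr by (try apply fr_bounds; lra).
    replace (fr (x0 + INR k * eps) + eps) with (fr (x0 + INR k * eps) - - eps) by ring.
    rewrite fr_fr, S_INR. f_equal. ring.
Qed.

Lemma iterZ_fr eps x0 n : 0 < eps < 1 -> 0 <= x0 < 1 ->
  iterZ (T2 eps) (T2inv eps) n x0 = fr (x0 - IZR n * eps).
Proof.
  intros He Hx. destruct n; simpl iterZ.
  - simpl. rewrite fr_id; lra.
  - rewrite iter_pos by lra. rewrite INR_IZR_INZ, positive_nat_Z. reflexivity.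
  - rewrite iter_neg by lra. rewrite INR_IZR_INZ, positive_nat_Z, <- Pos2Z.opp_pos, opp_IZR.
    f_equal. ring.
Qed.

Definition Gb (eps y : R) (i : nat) : bool :=
  if Rlt_dec (fr (y - INR i * eps)) eps then false else true.

Lemma coding2_Gb eps x0 n i : 0 < eps < 1 -> 0 <= x0 < 1 ->
  coding2 eps x0 (n + Z.of_nat i) = Gb eps (fr (x0 - IZR n * eps)) i.
Proof.
  intros He Hx. unfold coding2, Gb. rewrite iterZ_fr by lra. rewrite fr_fr.
  rewrite plus_IZR, <- INR_IZR_INZ.
  replace (x0 - (IZR n + INR i) * eps) with (x0 - IZR n * eps - INR i * eps) by ring.
  reflexivity.
Qed.

Lemma Lang_Gb M eps w : 0 < eps < 1 -> LangM M eps w ->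
  length w = M /\ exists y, 0 <= y < 1 /\ forall i, (i < M)%nat -> nth i w false = Gb eps y i.
Proof.
  intros He [HL [x0 [Hx [n Hn]]]]. split; [exact HL|].
  exists (fr (x0 - IZR n * eps)). split; [apply fr_bounds|].
  intros i Hi. rewrite Hn by exact Hi. apply coding2_Gb; lra.
Qed.

Definition cc eps k := fr (INR k * eps).
Definition ss eps y k := if Rle_dec (cc eps k) y then true else false.
Definition wr eps i := if Rlt_dec (cc eps (S i)) (cc eps i) then true else false.

Lemma cc_facts eps y i : 0 < eps < 1 -> 0 <= y < 1 ->
  fr (y - INR i * eps) = (if Rle_dec (cc eps i) y then y - cc eps i else y - cc eps i + 1) /\
  cc eps (S i) = (if Rlt_dec (cc eps i + eps) 1 then cc eps i + eps else cc eps i + eps - 1).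
Proof.
  intros He Hy. pose proof (fr_bounds (INR i * eps)) as Hb.
  unfold cc in *. set (z := Int_part (INR i * eps)).
  assert (Ea : fr (INR i * eps) = INR i * eps - IZR z) by reflexivity.
  split.
  - destruct (Rle_dec _ _).
    + apply (fr_unique _ _ z); [lra|]. rewrite Ea; ring.
    + apply (fr_unique _ _ (z + 1)); [lra|]. rewrite Ea, plus_IZR; simpl; ring.
  - rewrite S_INR. destruct (Rlt_dec _ _).
    + apply (fr_unique _ _ (- z)); [lra|]. rewrite Ea, opp_IZR; ring.
    + apply (fr_unique _ _ (- z - 1)); [lra|]. rewrite Ea, minus_IZR, opp_IZR; simpl; ring.
Qed.

Ltac brute :=
  repeat match goal with
  | |- context [Rle_dec ?x ?y] => destruct (Rle_dec x y)
  | |- context [Rlt_dec ?x ?y] => destruct (Rlt_dec x y)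
  end; simpl; try reflexivity; lra.

Lemma Gb_formula eps y i : 0 < eps < 1 -> 0 <= y < 1 ->
  Gb eps y i = if wr eps i then andb (negb (ss eps y i)) (ss eps y (S i))
               else orb (negb (ss eps y i)) (ss eps y (S i)).
Proof.
  intros He Hy. destruct (cc_facts eps y i He Hy) as [F1 F2].
  pose proof (fr_bounds (INR i * eps)) as Hb. unfold cc in *.
  unfold Gb, wr, ss, cc. rewrite F1, F2.
  destruct (Rlt_dec (fr (INR i * eps) + eps) 1); cbv beta iota; brute.
Qed.

Lemma Gb_xor eps y i : 0 < eps < 1 -> 0 <= y < 1 ->
  Gb eps y i = negb (xorb (xorb (ss eps y i) (ss eps y (S i))) (wr eps i)).
Proof.
  intros He Hy. destruct (cc_facts eps y i He Hy) as [F1 F2].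
  pose proof (fr_bounds (INR i * eps)) as Hb. unfold cc in *.
  unfold Gb, wr, ss, cc. rewrite F1, F2.
  destruct (Rlt_dec (fr (INR i * eps) + eps) 1); cbv beta iota; brute.
Qed.

Lemma cc0 eps : cc eps 0 = 0.
Proof. unfold cc. simpl INR. rewrite Rmult_0_l. apply fr_id. lra. Qed.

Lemma ss_true eps y k : ss eps y k = true <-> cc eps k <= y.
Proof. unfold ss. destruct (Rle_dec _ _); split; intros; auto; try discriminate; contradiction. Qed.

Lemma ss0 eps y : 0 <= y -> ss eps y 0 = true.
Proof. intros. apply ss_true. rewrite cc0. lra. Qed.

Lemma ss_mono eps y y' k : y <= y' -> ss eps y k = true -> ss eps y' k = true.
Proof. rewrite !ss_true. lra. Qed.

Lemma wr_true eps i : wr eps i = true <-> cc eps (S i) < cc eps i.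
Proof. unfold wr. destruct (Rlt_dec _ _); split; intros; auto; try discriminate; contradiction. Qed.

Definition TT eps M k := ss eps (cc eps M) k.
Definition qq eps M := cnt (TT eps M) (S M).

Lemma qq_bounds eps M : (1 <= M)%nat -> (2 <= qq eps M <= S M)%nat.
Proof.
  intros HM. unfold qq. split; [|apply cnt_le].
  simpl. assert (TM : TT eps M M = true) by (apply ss_true; lra). rewrite TM.
  assert (1 <= cnt (TT eps M) M)%nat.
  { apply (cnt_pos_of _ _ 0); [lia|]. apply ss_true. rewrite cc0. apply fr_bounds. }
  lia.
Qed.

Lemma pair_props eps b M w1 w2 : 0 < eps < 1 -> (1 <= b)%nat -> (2 * b <= M)%nat ->
  LangM M eps w1 -> LangM M eps w2 -> amicable b w1 w2 ->
  exists y1 y2, 0 <= y1 < 1 /\ 0 <= y2 < 1 /\ length w1 = M /\ length w2 = M /\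
   (forall i, (i < M)%nat -> nth i w1 false = Gb eps y1 i) /\
   (forall i, (i < M)%nat -> nth i w2 false = Gb eps y2 i) /\
   cnt (ss eps y2) (S M) = (cnt (ss eps y1) (S M) + b)%nat /\
   (1 <= cnt (ss eps y1) (S M))%nat /\ (cnt (ss eps y1) (S M) + b <= S M)%nat /\
   (qq eps M <= cnt (ss eps y1) (S M) \/ cnt (ss eps y1) (S M) + b + 1 <= qq eps M)%nat.
Proof.
  intros He Hb HM L1 L2 [w [_ [HB [E1 E2]]]].
  destruct (Lang_Gb _ _ _ He L1) as [Len1 [y1 [Hy1 G1]]].
  destruct (Lang_Gb _ _ _ He L2) as [Len2 [y2 [Hy2 G2]]].
  exists y1, y2. do 6 (split; [assumption|]).
  set (D := fun k => xorb (ss eps y1 k) (ss eps y2 k)).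
  assert (D0 : D 0%nat = false) by (unfold D; rewrite !ss0 by lra; reflexivity).
  assert (LW : length (flat_map sigma01 w) = M) by (rewrite <- E1; exact Len1).
  destruct (comb w D D0) as [DM [Dc Dp]].
  { intros i Hi. rewrite <- E1, <- E2. rewrite LW in Hi.
    rewrite G1, G2 by exact Hi. rewrite !Gb_xor by lra. unfold D.
    destruct (ss eps y1 i), (ss eps y1 (S i)), (ss eps y2 i), (ss eps y2 (S i)), (wr eps i);
      reflexivity. }
  rewrite LW, <- E1 in *. rewrite HB in Dc.
  assert (Hle : y1 <= y2).
  { destruct (Rle_dec y1 y2) as [h|h]; [exact h|exfalso].
    destruct (cnt_pos D (S M) ltac:(lia)) as [k [Hk Dk]].
    destruct k as [|p]; [congruence|].
    destruct (Dp p ltac:(lia) Dk) as [Dpp [W1p _]].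
    rewrite G1 in W1p by lia. rewrite Gb_formula in W1p by lra.
    assert (mono : forall j, ss eps y2 j = true -> ss eps y1 j = true)
      by (intros j; apply ss_mono; lra).
    unfold D in Dk, Dpp.
    destruct (ss eps y2 (S p)) eqn:S2.
    { rewrite (mono _ S2) in Dk. discriminate. }
    destruct (ss eps y1 (S p)) eqn:S1; [|discriminate].
    destruct (wr eps p) eqn:Wp; [|destruct (ss eps y1 p); discriminate].
    destruct (ss eps y1 p) eqn:P1; [|discriminate].
    destruct (ss eps y2 p) eqn:P2; [|discriminate].
    apply ss_true in P2. apply wr_true in Wp.
    assert (ss eps y2 (S p) = true) by (apply ss_true; lra). congruence. }
  assert (incl : forall k, (k < S M)%nat -> ss eps y1 k = true -> ss eps y2 k = true)
    by (intros k _; apply ss_mono; lra).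
  assert (Hc : (cnt (ss eps y1) (S M) + b = cnt (ss eps y2) (S M))%nat)
    by (rewrite <- Dc, (cnt_add _ _ _ incl); reflexivity).
  split; [symmetry; exact Hc|].
  split. { apply (cnt_pos_of _ _ 0); [lia|]. apply ss0; lra. }
  split. { rewrite Hc. apply cnt_le. }
  unfold D in DM. unfold qq.
  destruct (ss eps y1 M) eqn:S1M.
  - left. apply cnt_mono. intros k _ Tk. unfold TT in Tk.
    apply ss_true in Tk. apply ss_true in S1M. apply ss_true. lra.
  - right. destruct (ss eps y2 M) eqn:S2M; [discriminate|].
    rewrite Hc. simpl. rewrite S2M.
    assert (TM : TT eps M M = true) by (apply ss_true; lra). rewrite TM.
    assert (cnt (ss eps y2) M <= cnt (TT eps M) M)%nat.
    { apply cnt_mono. intros k _ Sk. apply ss_true in Sk. apply ss_true.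
      assert (~ cc eps M <= y2) by (intro h; apply ss_true in h; congruence). lra. }
    lia.
Qed.

Lemma same_list eps M y y' l l' : 0 < eps < 1 -> 0 <= y < 1 -> 0 <= y' < 1 ->
  cnt (ss eps y) (S M) = cnt (ss eps y') (S M) -> length l = M -> length l' = M ->
  (forall i, (i < M)%nat -> nth i l false = Gb eps y i) ->
  (forall i, (i < M)%nat -> nth i l' false = Gb eps y' i) -> l = l'.
Proof.
  intros He Hy Hy' Hc L L' G G'.
  assert (key : forall k, (k < S M)%nat -> ss eps y k = ss eps y' k).
  { destruct (Rle_dec y y') as [h|h].
    - apply cnt_eq; [|exact Hc]. intros k _; apply ss_mono; lra.
    - intros k Hk. symmetry. revert k Hk. apply cnt_eq; [|symmetry; exact Hc].
      intros k _; apply ss_mono; lra. }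
  apply nth_ext with false false; [congruence|].
  intros n Hn. rewrite L in Hn. rewrite G, G' by exact Hn.
  rewrite !Gb_formula by lra. rewrite (key n), (key (S n)) by lia. reflexivity.
Qed.

Definition Qd eps M b (p : list bool * list bool) (r : nat) : Prop :=
  exists y1 y2, 0 <= y1 < 1 /\ 0 <= y2 < 1 /\ length (fst p) = M /\ length (snd p) = M /\
   (forall i, (i < M)%nat -> nth i (fst p) false = Gb eps y1 i) /\
   (forall i, (i < M)%nat -> nth i (snd p) false = Gb eps y2 i) /\
   cnt (ss eps y1) (S M) = r /\ cnt (ss eps y2) (S M) = (r + b)%nat.

Theorem mainTheorem6 (eps : R) (b M : nat) :
  irrational eps -> 0 < eps < 1 ->
  (1 <= b)%nat -> (2 * b <= M)%nat ->
  forall ps : list (list bool * list bool),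
    NoDup ps ->
    (forall p, In p ps ->
       LangM M eps (fst p) /\ LangM M eps (snd p) /\ amicable b (fst p) (snd p)) ->
    (length ps <= M - b)%nat.
Proof.
  intros _ He Hb HM ps ND Hps.
  pose proof (qq_bounds eps M ltac:(lia)) as Hq.
  set (v := Nat.max 1 (qq eps M - b)).
  set (R0 := remove Nat.eq_dec v (seq 1 (M + 1 - b))).
  assert (Hv : In v (seq 1 (M + 1 - b))) by (apply in_seq; unfold v; lia).
  pose proof (remove_length_lt Nat.eq_dec _ _ Hv) as HR. rewrite length_seq in HR.
  assert (length ps <= length R0)%nat; [|unfold R0 in *; lia].
  apply (count_inj (Qd eps M b)); auto.
  - intros [a1 a2] [a1' a2'] r _ _ [y1 [y2 [Hy1 [Hy2 [L1 [L2 [G1 [G2 [C1 C2]]]]]]]]]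
      [y1' [y2' [Hy1' [Hy2' [L1' [L2' [G1' [G2' [C1' C2']]]]]]]]].
    cbn [fst snd] in *. f_equal.
    + apply (same_list eps M y1 y1'); auto; congruence.
    + apply (same_list eps M y2 y2'); auto; congruence.
  - intros p Hp. destruct (Hps p Hp) as [La [Lb Am]].
    destruct (pair_props eps b M _ _ He Hb HM La Lb Am)
      as [y1 [y2 [Hy1 [Hy2 [L1 [L2 [G1 [G2 [C [P1 [P2 P3]]]]]]]]]]].
    exists (cnt (ss eps y1) (S M)). split.
    + apply in_in_remove; [unfold v; lia|]. apply in_seq. lia.
    + exists y1, y2. repeat split; auto; lra.
Qed.
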